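(* Let $\widehat P$ be any transition kernel on finite $\mathcal S\times\mathcal A$, $r:\mathcal S\times\mathcal A\to[0,1]$, $n\ge2$ an integer, $s_0\in\mathcal S$, and $\underline{\widehat P}=(1-\frac1n)\widehat P+\frac1n\mathbf 1e_{s_0}^\top$. If a policy $\pi$ is greedy with respect to $r+\underline{\widehat P}h$ for some $h\in\mathbb R^{\mathcal S}$, then $$\widehat V^\star_{1-\frac1n}-\widehat V^\pi_{1-\frac1n}\le(n-1)\,\|\underline{\widehat h}^\star-h\|_{\mathrm{sp}}\,\mathbf 1 .$$
   Context: $\underline{\widehat P}(s'|s,a)=(1-\frac1n)\widehat P(s'|s,a)+\frac1n\mathbb 1\{s'=s_0\}$. For $x\in\mathbb R^{\mathcal S\times\mathcal A}$, a policy $\pi$ is greedy with respect to $x$ if $\sum_a\pi(a|s)x(s,a)=\max_ax(s,a)$ for all $s$; here $(r+\underline{\widehat P}h)(s,a)=r(s,a)+\sum_{s'}\underline{\widehat P}(s'|s,a)h(s')$. $\widehat V^\pi_\gamma=(I-\gamma\widehat P_\pi)^{-1}r_\pi$ and $\widehat V^\star_\gamma=\max_\pi\widehat V^\pi_\gamma$, with $\widehat P_\pi(s,s')=\sum_a\pi(a|s)\widehat P(s'|s,a)$, $r_\pi(s)=\sum_a\pi(a|s)r(s,a)$. $\underline{\widehat h}^\star$ is the optimal bias of the average-reward MDP $(\underline{\widehat P},r)$ (bias $\mathrm{C\text{-}lim}_T\sum_{t<T}(Q_\pi^tr_\pi-Q^\infty_\pi r_\pi)$ with $Q=\underline{\widehat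 P}$ of a Blackwell-optimal policy). $\|x\|_{\mathrm{sp}}=\max x-\min x$. *)

(* Defs.v *)
From HB Require Import structures.
From mathcomp Require Import all_boot all_order all_algebra.
From mathcomp Require Import all_classical all_reals all_analysis.
Set Implicit Arguments. Unset Strict Implicit. Unset Printing Implicit Defensive.
Import Order.TTheory GRing.Theory Num.Theory numFieldNormedType.Exports.
Local Open Scope classical_set_scope.
Local Open Scope ring_scope.

Section MDP.
Variables (R : realType) (m : nat) (A : finType).

(* P s a s' = P(s' | s, a) is a transition kernel. *)
Definition is_kernel (P : 'I_m -> A -> 'I_m -> R) :=
  (forall s a s', 0 <= P s a s') /\ (forall s a, \sum_(s' < m) P s a s' = 1).

(* a (stationary, possibly randomized) policy pi s a = pi(a | s) *)
Definition is_policy (pi : 'I_m -> A -> R) :=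
  (forall s a, 0 <= pi s a) /\ (forall s, \sum_(a : A) pi s a = 1).

Definition Plow (P : 'I_m -> A -> 'I_m -> R) (n : nat) (s0 : 'I_m) :
    'I_m -> A -> 'I_m -> R :=
  fun s a s' => (1 - n%:R^-1) * P s a s' + n%:R^-1 * (s' == s0)%:R.

Definition Ppi (P : 'I_m -> A -> 'I_m -> R) (pi : 'I_m -> A -> R) : 'M[R]_m :=
  \matrix_(s, s') \sum_(a : A) pi s a * P s a s'.

Definition rpi (r : 'I_m -> A -> R) (pi : 'I_m -> A -> R) : 'cV[R]_m :=
  \col_s \sum_(a : A) pi s a * r s a.

Definition Vpi (P : 'I_m -> A -> 'I_m -> R) (r : 'I_m -> A -> R) (gamma : R)
    (pi : 'I_m -> A -> R) : 'cV[R]_m :=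
  invmx (1%:M - gamma *: Ppi P pi) *m rpi r pi.

(* V^*_gamma = max over policies (pointwise supremum, attained) *)
Definition Vstar (P : 'I_m -> A -> 'I_m -> R) (r : 'I_m -> A -> R) (gamma : R)
    (s : 'I_m) : R :=
  sup [set (Vpi P r gamma pi) s 0 | pi in [set pi | is_policy pi]].

Definition greedy (pi : 'I_m -> A -> R) (x : 'I_m -> A -> R) :=
  forall s, \sum_(a : A) pi s a * x s a = sup (range (x s)).

Definition rPh (P : 'I_m -> A -> 'I_m -> R) (r : 'I_m -> A -> R) (h : 'I_m -> R) :
    'I_m -> A -> R :=
  fun s a => r s a + \sum_(s' < m) P s a s' * h s'.

Definition spn (x : 'I_m -> R) : R := sup (range x) - inf (range x).

Definition mpow (Q : 'M[R]_m) (t : nat) : 'M[R]_m := iter t (mulmx Q) 1%:M.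

Definition cesaro_lim (u : nat -> R) : R :=
  limn (fun T : nat => (T%:R^-1 * \sum_(t < T) u t : R)).

Definition Qinf (Q : 'M[R]_m) : 'M[R]_m :=
  \matrix_(i, j) cesaro_lim (fun t => mpow Q t i j).

Definition bias (P : 'I_m -> A -> 'I_m -> R) (r : 'I_m -> A -> R)
    (pi : 'I_m -> A -> R) (s : 'I_m) : R :=
  let Q := Ppi P pi in
  cesaro_lim (fun T => \sum_(t < T)
     ((mpow Q t *m rpi r pi) s 0 - (Qinf Q *m rpi r pi) s 0)).

Definition blackwell_optimal (P : 'I_m -> A -> 'I_m -> R) (r : 'I_m -> A -> R)
    (pi : 'I_m -> A -> R) :=
  is_policy pi /\
  exists gamma0 : R, 0 <= gamma0 < 1 /\
    forall gamma : R, gamma0 < gamma < 1 ->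
      forall s, (Vpi P r gamma pi) s 0 = Vstar P r gamma s.

End MDP.

(* Main.v *)
Require Import Defs.
From HB Require Import structures.
From mathcomp Require Import all_boot all_order all_algebra.
From mathcomp Require Import all_classical all_reals all_analysis.
From mathcomp Require Import lra ring.
Import Order.TTheory GRing.Theory Num.Theory numFieldNormedType.Exports.
Local Open Scope classical_set_scope.
Local Open Scope ring_scope.
Set Implicit Arguments. Unset Strict Implicit. Unset Printing Implicit Defensive.
Lemma cesaroL (R : realType) (g : R) (u : nat -> R) (L C : R) :
  0 <= g < 1 -> (forall T, `|u T - L| <= C * g ^+ T) -> cesaro_lim u = L.
Proof.
move=> /andP[g0 g1] Hu.
have e : (GRing.exp g : R^nat) @ \oo --> 0 by apply: cvg_expr; rewrite ger0_norm.
have eC : (fun T : nat => C * g ^+ T) @ \oo --> 0 by rewrite -(mulr0 C); apply: cvgMr.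
have uL : u @ \oo --> L.
  apply: (@squeeze_cvgr _ _ _ _ (fun T => L - C * g ^+ T) (fun T => L + C * g ^+ T)) .
  - near=> T; have := Hu T; rewrite ler_norml => /andP[h1 h2].
    apply/andP; split; lra.
  - have := cvgB (cvg_cst L) eC; rewrite subr0; exact.
  - have := cvgD (cvg_cst L) eC; rewrite addr0; exact.
have := cesaro uL => H.
rewrite /cesaro_lim; apply: cvg_lim => //.
rewrite -cvg_shiftS; apply: cvg_trans H; apply: near_eq_cvg; near=> T.
by rewrite /arithmetic_mean /series /= big_mkord.
Unshelve. all: by end_near.
Qed.
Section FP.
Variables (R : realType) (m : nat).

Definition stoch (S : 'M[R]_m) :=
  (forall i j, 0 <= S i j) /\ (forall i, \sum_j S i j = 1).

Lemma stoch_le (S : 'M[R]_m) (x : 'I_m -> R) X k : stoch S ->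
  (forall j, x j <= X) -> \sum_j S k j * x j <= X.
Proof.
move=> [S0 S1] Hx; apply: le_trans (_ : \sum_j S k j * X <= X).
  by apply: ler_sum => j _; apply: ler_wpM2l.
by rewrite -mulr_suml S1 mul1r.
Qed.

Lemma stoch_ge (S : 'M[R]_m) (x : 'I_m -> R) X k : stoch S ->
  (forall j, X <= x j) -> X <= \sum_j S k j * x j.
Proof.
move=> SS Hx; rewrite -[X]opprK -[X in _ <= X]opprK lerN2 -sumrN.
under eq_bigr do rewrite -mulrN.
by apply: stoch_le => // j; rewrite lerN2.
Qed.

Lemma stoch_abs (S : 'M[R]_m) (x : 'I_m -> R) X k : stoch S ->
  (forall j, `|x j| <= X) -> `|\sum_j S k j * x j| <= X.
Proof.
move=> SS Hx; rewrite ler_norml; apply/andP; split.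
  by apply: stoch_ge => // j; have := Hx j; rewrite ler_norml => /andP[].
by apply: stoch_le => // j; have := Hx j; rewrite ler_norml => /andP[].
Qed.

Lemma fp_bound (S : 'M[R]_m) (d B : R) (x y : 'I_m -> R) : stoch S -> 0 <= d < 1 ->
  (forall i, x i = y i + d * \sum_j S i j * x j) -> (forall i, `|y i| <= B) ->
  forall i, `|x i| <= B / (1 - d).
Proof.
move=> SS /andP[d0 d1] Hx Hy i.
set X := \big[Num.max/0]_j `|x j|.
have HS k : `|\sum_j S k j * x j| <= X by apply: stoch_abs => // j; apply: le_bigmax.
have B0 : 0 <= B := le_trans (normr_ge0 _) (Hy i).
have X0 : 0 <= X := bigmax_ge_id _ _ _ _.
have Hk k : `|x k| <= B + d * X.
  rewrite Hx; apply: le_trans (ler_normD _ _) _; apply: lerD => //.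
  by rewrite normrM ger0_norm //; apply: ler_wpM2l.
have : X <= B + d * X by apply: bigmax_le; [ nra | move=> k _; exact: Hk].
move=> HX; have Hi : `|x i| <= X by rewrite /X; exact: le_bigmax.
apply: le_trans Hi _.
rewrite ler_pdivlMr; last by lra.
nra.
Qed.

Lemma fp_nonneg (S : 'M[R]_m) (d : R) (x y : 'I_m -> R) : stoch S -> 0 <= d < 1 ->
  (forall i, x i = y i + d * \sum_j S i j * x j) -> (forall i, 0 <= y i) ->
  forall i, y i <= x i.
Proof.
move=> SS /andP[d0 d1] Hx Hy.
set X := \big[Num.max/0]_j (- x j).
have X0 : 0 <= X := bigmax_ge_id _ _ _ _.
have HS k : - X <= \sum_j S k j * x j.
  by apply: stoch_ge => // j; rewrite lerNl; apply: le_bigmax.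
have Hk k : - x k <= d * X.
  rewrite (Hx k) opprD; have := Hy k; have := HS k; set s := \sum_(j < m) _; move=> h1 h2.
  have h3 : 0 <= d * (s + X) by apply: mulr_ge0 => //; lra.
  lra.
have : X <= d * X by apply: bigmax_le; [ exact: mulr_ge0 | move=> k _; exact: Hk].
move=> HX; have XX : X = 0.
  apply/eqP; rewrite eq_le X0 andbT.
  have : (1 - d) * X <= 0 by lra.
  by rewrite pmulr_rle0 // subr_gt0.
move=> i; rewrite (Hx i); have := HS i; rewrite XX oppr0 => h.
have := mulr_ge0 d0 h; lra.
Qed.

Lemma fp_unit (S : 'M[R]_m) (d : R) : stoch S -> 0 <= d < 1 ->
  (1%:M - d *: S) \in unitmx.
Proof.
move=> SS dd; rewrite unitmxE unitfE -det_tr; apply/negP => /det0P [v v0 vA].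
have Ax : (1%:M - d *: S) *m v^T = 0.
  by rewrite -[_ *m _]trmxK trmx_mul trmxK vA trmx0.
have Hx i : v^T i 0 = 0 + d * \sum_j S i j * v^T j 0.
  have := congr1 (fun M : 'M[R]_(m,1) => M i 0) Ax.
  rewrite mulmxBl mul1mx -scalemxAl !mxE => /eqP; rewrite subr_eq0 => /eqP ->.
  by rewrite add0r.
have H := @fp_bound S d 0 (fun i => v^T i 0) (fun _ => 0) SS dd Hx (fun i => (ltac:(by rewrite normr0) : `|0| <= 0 :> R)).
move/negP: v0; apply; apply/eqP/rowP => j; rewrite [RHS]mxE.
have := H j.
rewrite mul0r normr_le0 mxE => /eqP ->; by [].
Qed.

Lemma fp_eq (S : 'M[R]_m) (d : R) (y : 'cV[R]_m) i : stoch S -> 0 <= d < 1 ->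
  (invmx (1%:M - d *: S) *m y) i 0 =
   y i 0 + d * \sum_j S i j * (invmx (1%:M - d *: S) *m y) j 0.
Proof.
move=> SS dd; set x := invmx _ *m y.
have Ax : (1%:M - d *: S) *m x = y by rewrite /x mulKVmx //; apply: fp_unit.
have := congr1 (fun M : 'M[R]_(m,1) => M i 0) Ax.
rewrite mulmxBl mul1mx -scalemxAl !mxE => <-.
by rewrite subrK.
Qed.

End FP.
Section Mx.
Variables (R : realType) (m : nat).

Definition Umx (s0 : 'I_m) : 'M[R]_m := \matrix_(i, j) (j == s0)%:R.

Lemma Umx_mul q s0 (X : 'M[R]_(m,q)) i j : (Umx s0 *m X) i j = X s0 j.
Proof.
rewrite !mxE (bigD1 s0) //= big1 ?addr0; first by rewrite mxE eqxx mul1r.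
by move=> l /negbTE hl; rewrite mxE hl mul0r.
Qed.

Lemma mxDE p q (A B : 'M[R]_(p,q)) i j : (A + B) i j = A i j + B i j.
Proof. by rewrite mxE. Qed.
Lemma mxBE p q (A B : 'M[R]_(p,q)) i j : (A - B) i j = A i j - B i j.
Proof. by rewrite !mxE. Qed.
Lemma mxNE p q (A : 'M[R]_(p,q)) i j : (- A) i j = - A i j.
Proof. by rewrite mxE. Qed.
Lemma mxZE p q a (A : 'M[R]_(p,q)) i j : (a *: A) i j = a * A i j.
Proof. by rewrite mxE. Qed.

Definition Ssum (M : 'M[R]_m) (g : R) (t : nat) : 'M[R]_m :=
  \sum_(l < t) g ^+ l *: mpow M l.

Lemma mpowS (M : 'M[R]_m) t : mpow M t.+1 = M *m mpow M t.
Proof. by []. Qed.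

Lemma mpowQ (M : 'M[R]_m) (k : R) s0 t :
  (forall i, \sum_j M i j = 1) ->
  mpow ((1 - k) *: M + k *: Umx s0) t =
  (1 - k) ^+ t *: mpow M t + k *: (Umx s0 *m Ssum M (1 - k) t).
Proof.
move=> M1.
have MU : M *m Umx s0 = Umx s0.
  apply/matrixP => i j; rewrite !mxE.
  under eq_bigr do rewrite mxE.
  by rewrite -mulr_suml M1 mul1r.
have UU : Umx s0 *m Umx s0 = Umx s0 by apply/matrixP => i j; rewrite Umx_mul !mxE.
elim: t => [|t IH].
  by rewrite /Ssum big_ord0 mulmx0 scaler0 addr0 expr0 scale1r.
rewrite mpowS IH /Ssum big_ord_recr /= -/(Ssum M (1-k) t).
set A := mpow M t; set S := Ssum M (1 - k) t.
rewrite mulmxDl !mulmxDr -!scalemxAl -!scalemxAr !mulmxA MU UU !scalerA.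

set X1 := M *m A; set X2 := Umx s0 *m S; set X3 := Umx s0 *m A.
apply/matrixP => i j; rewrite !mxE exprS; ring.
Qed.


Lemma Ssum_eq (M : 'M[R]_m) (g : R) t :
  (1%:M - g *: M) \in unitmx ->
  Ssum M g t = invmx (1%:M - g *: M) - g ^+ t *: (invmx (1%:M - g *: M) *m mpow M t).
Proof.
move=> uA.
have H : (1%:M - g *: M) *m Ssum M g t = 1%:M - g ^+ t *: mpow M t.
  elim: t => [|t IH]; first by rewrite /Ssum big_ord0 mulmx0 expr0 scale1r /= subrr.
  rewrite /Ssum big_ord_recr /= mulmxDr -/(Ssum M g t) IH.
  rewrite mulmxBl mul1mx -scalemxAl -scalemxAr scalerA.
  set A := mpow M t; set X := M *m A.
  apply/matrixP => i j; rewrite !mxE exprS; ring.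
rewrite -[Ssum M g t](mulKmx uA) H mulmxBr mulmx1 -scalemxAr //.
Qed.

Lemma stoch_mpow (M : 'M[R]_m) t : stoch M -> stoch (mpow M t).
Proof.
move=> [M0 M1]; elim: t => [|t [IH0 IH1]].
  split=> [i j|i]; first by rewrite /= mxE; case: (i == j).
  by rewrite /= (bigD1 i) //= big1 ?mxE ?eqxx ?addr0 // => j /negbTE; rewrite mxE eq_sym => ->.
split=> [i j|i].
  by rewrite mpowS mxE; apply: sumr_ge0 => l _; apply: mulr_ge0.
rewrite mpowS; under eq_bigr do rewrite mxE.
rewrite exchange_big /=; under eq_bigr do rewrite -mulr_sumr IH1 mulr1.
exact: M1.
Qed.

Lemma stoch_le1 (M : 'M[R]_m) i j : stoch M -> M i j <= 1.
Proof.
move=> [M0 M1]; rewrite -(M1 i) (bigD1 j) //= lerDl.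
by apply: sumr_ge0.
Qed.

Lemma mul_bound (A : 'M[R]_m) (x : 'M[R]_(m,1)) i (X : R) :
  (forall l, `|x l 0| <= X) -> `|(A *m x) i 0| <= \sum_l `|A i l| * X.
Proof.
move=> Hx; rewrite mxE; apply: le_trans (ler_norm_sum _ _ _) _.
apply: ler_sum => l _; rewrite normrM; apply: ler_wpM2l => //.
Qed.

Lemma mul_bound2 (A B : 'M[R]_m) i j :
  stoch B -> `|(A *m B) i j| <= \sum_l `|A i l|.
Proof.
move=> SB; rewrite mxE; apply: le_trans (ler_norm_sum _ _ _) _.
apply: ler_sum => l _; rewrite normrM -[X in _ <= X]mulr1; apply: ler_wpM2l => //.
by rewrite ger0_norm; [apply: stoch_le1 | case: SB].
Qed.

Lemma Qinf_eq (M : 'M[R]_m) (k : R) s0 :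
  stoch M -> 0 < k <= 1 ->
  Qinf ((1 - k) *: M + k *: Umx s0) = k *: (Umx s0 *m invmx (1%:M - (1 - k) *: M)).
Proof.
move=> SM /andP[k0 k1].
have gg : 0 <= 1 - k < 1 by apply/andP; split; lra.
have uA := fp_unit SM gg.
set N := invmx _.
apply/matrixP => i j; rewrite mxE [RHS]mxE Umx_mul.
apply: (@cesaroL _ (1 - k) _ _ (1 + k * \sum_l `|N s0 l|)) => // t.
rewrite mpowQ; last by case: SM.
rewrite Ssum_eq // -/N mxDE !mxZE Umx_mul mxBE mxZE.
have h1 : `|mpow M t i j| <= 1.
  by rewrite ger0_norm; [apply: stoch_le1; apply: stoch_mpow | case: (stoch_mpow t SM)].
have h2 : `|(N *m mpow M t) s0 j| <= \sum_l `|N s0 l| := mul_bound2 _ _ _ (stoch_mpow t SM).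
set a := mpow M t i j; set b := (N *m mpow M t) s0 j; set c := \sum_l _.
have e : (1 - k) ^+ t * a + k * (N s0 j - (1 - k) ^+ t * b) - k * N s0 j =
   (1 - k) ^+ t * (a - k * b) by ring.
rewrite e normrM ger0_norm ?exprn_ge0 ?subr_ge0 // mulrC ler_wpM2r ?exprn_ge0 ?subr_ge0 //.
apply: le_trans (ler_normB _ _) _; apply: lerD => //.
rewrite normrM ger0_norm; [apply: ler_wpM2l => //; exact: ltW | exact: ltW].
Qed.

End Mx.
Arguments Umx {R m} s0.

Section MDP.
Variables (R : realType) (m : nat) (A : finType).
Implicit Types (P : 'I_m -> A -> 'I_m -> R) (r : 'I_m -> A -> R) (pi : 'I_m -> A -> R).

Lemma stoch_Ppi P pi : is_kernel P -> is_policy pi -> stoch (Ppi P pi).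
Proof.
move=> [P0 P1] [p0 p1]; split=> [i j|i].
  by rewrite mxE; apply: sumr_ge0 => a _; apply: mulr_ge0.
under eq_bigr do rewrite mxE.
rewrite exchange_big /=; under eq_bigr do rewrite -mulr_sumr P1 mulr1.
exact: p1.
Qed.

Lemma sum_delta (s0 : 'I_m) : \sum_(j < m) (j == s0)%:R = 1 :> R.
Proof.
by rewrite (bigD1 s0) //= eqxx big1 ?addr0 // => j /negbTE ->.
Qed.

Lemma kernel_Plow P n s0 : is_kernel P -> (0 < n)%N -> is_kernel (Plow P n s0).
Proof.
move=> [P0 P1] n0.
have k0 : 0 < n%:R^-1 :> R by rewrite invr_gt0 ltr0n.
have k1 : n%:R^-1 <= 1 :> R by rewrite invf_le1 ?ler1n ?ltr0n.
split=> [s a s'|s a].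
  rewrite /Plow; apply: addr_ge0; apply: mulr_ge0 => //; try lra.
rewrite /Plow big_split /= -!mulr_sumr P1 sum_delta; ring.
Qed.

Lemma Ppi_Plow P pi n s0 : is_policy pi ->
  Ppi (Plow P n s0) pi = (1 - n%:R^-1) *: Ppi P pi + n%:R^-1 *: Umx s0.
Proof.
move=> [p0 p1]; apply/matrixP => i j; rewrite mxDE !mxZE !mxE.
under eq_bigr do rewrite /Plow mulrDr mulrCA [X in _ + X]mulrCA.
rewrite big_split /= -!mulr_sumr -[X in _ + _ * X]mulr_suml p1 mul1r.
by [].
Qed.

Lemma rpi_bound r pi i : (forall s a, 0 <= r s a <= 1) -> is_policy pi ->
  0 <= rpi r pi i 0 <= 1.
Proof.
move=> Hr [p0 p1]; rewrite mxE; apply/andP; split.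
  by apply: sumr_ge0 => a _; apply: mulr_ge0 => //; case/andP: (Hr i a).
rewrite -(p1 i); apply: ler_sum => a _; rewrite -[X in _ <= X]mulr1.
by apply: ler_wpM2l => //; case/andP: (Hr i a).
Qed.

Lemma Vpi_eq P r pi (d : R) i : is_kernel P -> is_policy pi -> 0 <= d < 1 ->
  Vpi P r d pi i 0 = rpi r pi i 0 + d * \sum_j Ppi P pi i j * Vpi P r d pi j 0.
Proof. by move=> KP Ppol dd; rewrite /Vpi fp_eq //; apply: stoch_Ppi. Qed.

Lemma bias_eq P r piB n s0 : is_kernel P -> is_policy piB -> (0 < n)%N ->
  (forall s a, 0 <= r s a <= 1) ->
  exists D, forall s, bias (Plow P n s0) r piB s = Vpi P r (1 - n%:R^-1) piB s 0 - D.
Proof.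
move=> KP pB n0 Hr.
set k : R := n%:R^-1.
have k0 : 0 < k by rewrite invr_gt0 ltr0n.
have k1 : k <= 1 by rewrite invf_le1 ?ler1n ?ltr0n.
have gg : 0 <= 1 - k < 1 by apply/andP; split; lra.
set M := Ppi P piB; set u := rpi r piB.
have SM : stoch M := stoch_Ppi KP pB.
have uA := fp_unit SM gg.
set N := invmx (1%:M - (1 - k) *: M).
set W : 'M[R]_m := 1%:M - k *: (Umx s0 *m N).
exists (k * (N *m (N *m u)) s0 0) => s.
rewrite /bias /= Ppi_Plow // -/k -/M -/u Qinf_eq //; last by apply/andP.
rewrite -/N.
have Ht t : mpow ((1 - k) *: M + k *: Umx s0) t - k *: (Umx s0 *m N) =
            W *m ((1 - k) ^+ t *: mpow M t).
  rewrite mpowQ; last by case: SM.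
  rewrite Ssum_eq // -/N mulmxBr -scalemxAr mulmxA /W mulmxBl mul1mx.
  rewrite -scalemxAl -scalemxAr.
  set X := Umx s0 *m N; set Y := mpow M t; set Z := X *m Y.
  apply/matrixP => i j; rewrite !(mxBE, mxDE, mxZE, mxNE); ring.
have Hs T : \sum_(t < T) ((mpow ((1 - k) *: M + k *: Umx s0) t *m u) s 0 -
                          (k *: (Umx s0 *m N) *m u) s 0) =
            ((W *m N) *m u) s 0 - (1 - k) ^+ T * ((W *m N) *m (mpow M T *m u)) s 0.
  under eq_bigr do rewrite -mxBE -mulmxBl Ht.
  rewrite -summxE -mulmx_suml -mulmx_sumr -/(Ssum M (1 - k) T) Ssum_eq // -/N.
  rewrite mulmxBr mulmxBl mxBE -scalemxAr -scalemxAl mxZE !mulmxA.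
  by [].
rewrite (_ : Vpi P r (1 - k) piB s 0 = (N *m u) s 0) //.
have -> : (N *m u) s 0 - k * (N *m (N *m u)) s0 0 = ((W *m N) *m u) s 0.
  rewrite /W mulmxBl mul1mx -scalemxAl mulmxBl mxBE -scalemxAl mxZE.
  by rewrite -!mulmxA Umx_mul.
apply: (@cesaroL _ (1 - k) _ _ (\sum_l `|(W *m N) s l| * 1)) => // T.
rewrite Hs addrAC subrr add0r normrN normrM ger0_norm ?exprn_ge0 ?subr_ge0 // mulrC.
apply: ler_wpM2r; first by rewrite exprn_ge0 // subr_ge0.
apply: mul_bound => l.
rewrite mxE; apply: (stoch_abs (x := fun j => u j 0)); first exact: stoch_mpow.
by move=> j; case/andP: (rpi_bound j Hr pB) => h1 h2; rewrite ger0_norm.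
Qed.


Lemma sum_le_abs (x : 'I_m -> R) j : `|x j| <= \sum_l `|x l|.
Proof. by rewrite (bigD1 j) //= lerDl sumr_ge0. Qed.

Lemma range_ub (x : 'I_m -> R) j : x j <= sup (range x).
Proof.
apply: ub_le_sup; last by exists j.
exists (\sum_l `|x l|) => _ [l _ <-].
exact: le_trans (ler_norm _) (sum_le_abs x l).
Qed.

Lemma range_lb (x : 'I_m -> R) j : inf (range x) <= x j.
Proof.
apply: ge_inf; last by exists j.
exists (- \sum_l `|x l|) => _ [l _ <-].
rewrite lerNl; apply: le_trans (ler_norm _) _; rewrite normrN; exact: sum_le_abs.
Qed.

Lemma range_ubA (x : A -> R) a : x a <= sup (range x).
Proof.
apply: ub_le_sup; last by exists a.
exists (\sum_l `|x l|) => _ [l _ <-].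
apply: le_trans (ler_norm _) _; by rewrite (bigD1 l) //= lerDl sumr_ge0.
Qed.

Lemma polsum P r pi (d : R) (V : 'I_m -> R) i :
  \sum_a pi i a * (r i a + d * \sum_j P i a j * V j) =
  rpi r pi i 0 + d * \sum_j Ppi P pi i j * V j.
Proof.
rewrite mxE; under eq_bigr do rewrite mulrDr.
rewrite big_split /=; congr (_ + _).
under [X in _ = _ * X]eq_bigr do rewrite mxE mulr_suml.
rewrite exchange_big /= mulr_sumr; apply: eq_bigr => a _.
rewrite mulrCA mulr_sumr; congr (_ * _); apply: eq_bigr => j _; ring.
Qed.

Lemma diff_fp P r pi (d : R) (V : 'I_m -> R) i :
  is_kernel P -> is_policy pi -> 0 <= d < 1 ->
  V i - Vpi P r d pi i 0 =
    (V i - \sum_a pi i a * (r i a + d * \sum_j P i a j * V j)) +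
    d * \sum_j Ppi P pi i j * (V j - Vpi P r d pi j 0).
Proof.
move=> KP pp dd; rewrite polsum (Vpi_eq r i KP pp dd).
under [X in _ = _ + _ * X]eq_bigr do rewrite mulrBr.
rewrite sumrB; ring.
Qed.

Lemma Vpi_ub P r pi (d : R) s : is_kernel P -> is_policy pi -> 0 <= d < 1 ->
  (forall s a, 0 <= r s a <= 1) -> Vpi P r d pi s 0 <= Vstar P r d s.
Proof.
move=> KP pp dd Hr; apply: sup_upper_bound; last by exists pi.
split; first by exists (Vpi P r d pi s 0), pi.
exists (1 / (1 - d)) => _ [p' /= pp' <-].
have H := @fp_bound _ _ (Ppi P p') d 1 (fun i => Vpi P r d p' i 0)
  (fun i => rpi r p' i 0) (stoch_Ppi KP pp') dd (fun i => Vpi_eq r i KP pp' dd).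
apply: le_trans (ler_norm _) (H _ _) => i.
by case/andP: (rpi_bound i Hr pp') => h1 h2; rewrite ger0_norm.
Qed.

Lemma Vstar_le P r (d : R) (V : 'I_m -> R) s : is_kernel P -> 0 <= d < 1 ->
  (forall s a, 0 <= r s a <= 1) ->
  (exists pi, is_policy pi) ->
  (forall i a, r i a + d * \sum_j P i a j * V j <= V i) ->
  Vstar P r d s <= V s.
Proof.
move=> KP dd Hr [pi0 pp0] HV; apply: ge_sup; first by exists (Vpi P r d pi0 s 0), pi0.
move=> _ [p' /= pp' <-]; rewrite -subr_ge0.
have y0 i : 0 <= V i - \sum_a p' i a * (r i a + d * \sum_j P i a j * V j).
  rewrite subr_ge0; case: pp' => p0 p1; rewrite -[X in _ <= X]mul1r -(p1 i) mulr_suml.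
  by apply: ler_sum => a _; apply: ler_wpM2l.
have := @fp_nonneg _ _ (Ppi P p') d (fun i => V i - Vpi P r d p' i 0) _
  (stoch_Ppi KP pp') dd (fun i => diff_fp r V i KP pp' dd) y0 s.
by apply: le_trans.
Qed.

Lemma conv_le (I : finType) (p f : I -> R) X : (forall i, 0 <= p i) ->
  \sum_i p i = 1 -> (forall i, f i <= X) -> \sum_i p i * f i <= X.
Proof.
move=> p0 p1 hf; apply: le_trans (_ : \sum_i p i * X <= X).
  by apply: ler_sum => i _; apply: ler_wpM2l.
by rewrite -mulr_suml p1 mul1r.
Qed.

Lemma conv_ge (I : finType) (p f : I -> R) X : (forall i, 0 <= p i) ->
  \sum_i p i = 1 -> (forall i, X <= f i) -> X <= \sum_i p i * f i.
Proof.
move=> p0 p1 hf; apply: (@le_trans _ _ (\sum_i p i * X)).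
  by rewrite -mulr_suml p1 mul1r.
by apply: ler_sum => i _; apply: ler_wpM2l.
Qed.

Lemma sum_delta_f (s0 : 'I_m) (f : 'I_m -> R) : \sum_j (j == s0)%:R * f j = f s0.
Proof.
by rewrite (bigD1 s0) //= eqxx mul1r big1 ?addr0 // => j /negbTE ->; rewrite mul0r.
Qed.

Lemma greedy_bound P r n s0 pi piB h (d : 'I_m -> R) (D : R) s :
  is_kernel P -> (0 < n)%N -> (forall s a, 0 <= r s a <= 1) ->
  is_policy pi -> is_policy piB ->
  greedy pi (rPh (Plow P n s0) r h) ->
  (forall i a, r i a + (1 - n%:R^-1) * \sum_j P i a j * Vpi P r (1 - n%:R^-1) piB j 0
      <= Vpi P r (1 - n%:R^-1) piB i 0) ->
  (forall j, Vpi P r (1 - n%:R^-1) piB j 0 = h j + d j + D) ->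
  Vpi P r (1 - n%:R^-1) piB s 0 - Vpi P r (1 - n%:R^-1) pi s 0
    <= (n%:R - 1) * spn d.
Proof.
move=> KP n0 Hr pp ppB Hg Hopt HV.
set k : R := n%:R^-1.
have k0 : 0 < k by rewrite invr_gt0 ltr0n.
have k1 : k <= 1 by rewrite invf_le1 ?ler1n ?ltr0n.
have gg : 0 <= 1 - k < 1 by apply/andP; split; lra.
set V := fun j => Vpi P r (1 - k) piB j 0.
have [p0 p1] := pp; have [q0 q1] := ppB; have [P0 P1] := KP.
set y := fun i => V i - \sum_a pi i a * (r i a + (1 - k) * \sum_j P i a j * V j).
have y0 i : 0 <= y i.
  rewrite subr_ge0; apply: conv_le => // a; exact: Hopt.
have Hsp : 0 <= spn d.
  by rewrite /spn subr_ge0; apply: le_trans (range_lb d s) (range_ub d s).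
have yle i : y i <= (1 - k) * spn d.
  set G := fun a => r i a + (1 - k) * \sum_j P i a j * h j.
  set Hd := fun a => \sum_j P i a j * d j.
  have HF a : r i a + (1 - k) * \sum_j P i a j * V j = G a + (1 - k) * Hd a + (1 - k) * D.
    rewrite /G /Hd /V.
    under eq_bigr do rewrite HV !mulrDr.
    rewrite !big_split /= -mulr_suml P1; ring.
  have HVi : V i = \sum_a piB i a * (r i a + (1 - k) * \sum_j P i a j * V j).
    by rewrite polsum /V -Vpi_eq.
  have Hx : rPh (Plow P n s0) r h i = fun a => G a + k * h s0.
    apply: funext => a; rewrite /rPh /Plow /G.
    under eq_bigr do rewrite mulrDl -!mulrA.
    rewrite big_split /= -!mulr_sumr sum_delta_f -/k; ring.
  have Gle a' : G a' <= \sum_a pi i a * G a.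
    have := Hg i; rewrite Hx => e.
    have := range_ubA (fun a => G a + k * h s0) a'; rewrite -e /=.
    under eq_bigr do rewrite mulrDr.
    rewrite big_split /= -mulr_suml p1 mul1r; lra.
  have hsum (p : 'I_m -> A -> R) : is_policy p ->
      \sum_a p i a * (r i a + (1 - k) * \sum_j P i a j * V j) =
      \sum_a p i a * G a + (1 - k) * \sum_a p i a * Hd a + (1 - k) * D.
    move=> [pp0 pp1].
    rewrite (eq_bigr (fun a => p i a * G a + (1 - k) * (p i a * Hd a) + (1 - k) * D * p i a)); last first.
      by move=> a _; rewrite HF; ring.
    by rewrite !big_split /= -!mulr_sumr pp1 mulr1.
  rewrite /y HVi hsum // hsum //.
  have e1 : \sum_a piB i a * G a <= \sum_a pi i a * G a by apply: conv_le.
  have e2 : \sum_a piB i a * Hd a <= sup (range d).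
    apply: conv_le => // a; apply: conv_le => //; exact: range_ub.
  have e3 : inf (range d) <= \sum_a pi i a * Hd a.
    apply: conv_ge => // a; apply: conv_ge => //; exact: range_lb.
  rewrite /spn.
  have h4 : (1 - k) * (\sum_a piB i a * Hd a - \sum_a pi i a * Hd a) <=
            (1 - k) * (sup (range d) - inf (range d)).
    by apply: ler_wpM2l; lra.
  lra.
have He := @fp_bound _ _ (Ppi P pi) (1 - k) ((1 - k) * spn d)
  (fun i => V i - Vpi P r (1 - k) pi i 0) y (stoch_Ppi KP pp) gg
  (fun i => diff_fp r V i KP pp gg) (fun i => ltac:(by rewrite ger0_norm)) s.
have Eq : (1 - k) * spn d / (1 - (1 - k)) = (n%:R - 1) * spn d.
  have nz : n%:R != 0 :> R by rewrite pnatr_eq0 -lt0n.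
  rewrite /k; field; rewrite nz /=; rewrite opprB addrC subrK oner_eq0 //.
rewrite -Eq; exact: le_trans (ler_norm _) He.
Qed.

Lemma sum_deltaT (I : finType) (x0 : I) (f : I -> R) : \sum_i (i == x0)%:R * f i = f x0.
Proof.
by rewrite (bigD1 x0) //= eqxx mul1r big1 ?addr0 // => j /negbTE ->; rewrite mul0r.
Qed.

Lemma prob_abs (I : finType) (p f : I -> R) X : (forall i, 0 <= p i) ->
  \sum_i p i = 1 -> (forall i, `|f i| <= X) -> `|\sum_i p i * f i| <= X.
Proof.
move=> p0 p1 hf; rewrite ler_norml; apply/andP; split.
  by apply: conv_ge => // i; have := hf i; rewrite ler_norml => /andP[].
by apply: conv_le => // i; have := hf i; rewrite ler_norml => /andP[].
Qed.

Lemma d_aux (bt k : R) : 0 <= bt < 1 -> 0 < k <= 1 ->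
  [/\ 0 <= bt * (1 - k), bt * (1 - k) <= 1 - k, bt * (1 - k) < 1 & 1 - bt * (1 - k) != 0].
Proof.
move=> /andP[b0 b1] /andP[k0 k1].
have h1 : 0 <= bt * (1 - k) by apply: mulr_ge0; lra.
have h2 : bt * (1 - k) <= 1 - k by rewrite -[X in _ <= X]mul1r; apply: ler_wpM2r; lra.
split => //; first lra.
by rewrite subr_eq0; apply/eqP => h; lra.
Qed.

Lemma c_aux (bt CV : R) : bt < 1 -> 0 <= CV -> 0 <= (1 - bt) * (1 + CV).
Proof. by move=> h1 h2; apply: mulr_ge0; lra. Qed.

Lemma y_aux (bt k CV w uu : R) : 0 <= bt < 1 -> 0 < k <= 1 -> `|w| <= CV ->
  0 <= uu <= 1 -> `|(bt - 1) * uu + (bt * (1 - k) - (1 - k)) * w| <= (1 - bt) * (1 + CV).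
Proof.
move=> /andP[b0 b1] /andP[k0 k1]; rewrite ler_norml => /andP[w1 w2] /andP[u0 u1].
have hb : 0 <= 1 - bt by lra.
have t1 : 0 <= (1 - bt) * uu <= 1 - bt.
  apply/andP; split; first exact: mulr_ge0.
  by rewrite -[X in _ <= X]mulr1; apply: ler_wpM2l.
have t2 : (1 - bt) * (1 - k) * (CV - w) >= 0.
  by apply: mulr_ge0; [apply: mulr_ge0; lra | lra].
have t3 : (1 - bt) * (1 - k) * (CV + w) >= 0.
  by apply: mulr_ge0; [apply: mulr_ge0; lra | lra].
have CV0 : 0 <= CV by lra.
have t4 : (1 - bt) * k * CV >= 0 by apply: mulr_ge0 => //; apply: mulr_ge0; lra.
rewrite ler_norml; apply/andP; split; nra.
Qed.

Lemma Eb_aux (c k dd : R) : 0 <= c -> 0 < k -> dd <= 1 - k -> c / (1 - dd) <= c / k.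
Proof.
move=> c0 k0 kd; apply: ler_wpM2l => //; rewrite lef_pV2 ?posrE //; lra.
Qed.

Lemma fin_aux (g Dl x y B k : R) : `|x| <= B -> `|y| <= B ->
  g - Dl = (1 - k) * (x - y) -> 2 * B <= Dl / 2 -> 0 < k <= 1 -> Dl / 2 <= g.
Proof.
rewrite !ler_norml => /andP[x1 x2] /andP[y1 y2] e h /andP[k0 k1].
have hw : - (2 * B) <= x - y by lra.
have : k * (2 * B + (x - y)) >= 0 by apply: mulr_ge0; lra.
nra.
Qed.

Lemma blackwell_opt P r n s0 piB : is_kernel P -> (0 < n)%N ->
  (forall s a, 0 <= r s a <= 1) ->
  blackwell_optimal (Plow P n s0) r piB ->
  forall i a, r i a + (1 - n%:R^-1) * \sum_j P i a j * Vpi P r (1 - n%:R^-1) piB j 0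
      <= Vpi P r (1 - n%:R^-1) piB i 0.
Proof.
move=> KP n0 Hr [ppB [b0 [/andP[b00 b01] Hb]]] s1 a1.
set k : R := n%:R^-1.
have k0 : 0 < k by rewrite invr_gt0 ltr0n.
have k1 : k <= 1 by rewrite invf_le1 ?ler1n ?ltr0n.
have gg : 0 <= 1 - k < 1 by apply/andP; split; lra.
set V := fun j => Vpi P r (1 - k) piB j 0.
set M := Ppi P piB; set u := fun j => rpi r piB j 0.
have SM : stoch M := stoch_Ppi KP ppB.
have [P0 P1] := KP; have [q0 q1] := ppB.
have KPl := kernel_Plow s0 KP n0.
rewrite leNgt; apply/negP => HD.
set Dl := r s1 a1 + (1 - k) * \sum_j P s1 a1 j * V j - V s1.
have Dl0 : 0 < Dl by rewrite /Dl subr_gt0.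
set CV := \sum_j `|V j|.
have CV0 : 0 <= CV by apply: sumr_ge0.
have MVb i : `|\sum_j M i j * V j| <= CV by apply: stoch_abs => // j; apply: sum_le_abs.
have ub i : 0 <= u i <= 1 by apply: rpi_bound.
set K := 2 * (1 + CV) / k.
have K0 : 0 < K by rewrite /K; apply: divr_gt0 => //; lra.
set b1 := Num.max b0 (1 - Dl / K).
have hb1 : b0 <= b1 by rewrite le_max lexx.
have hb2 : 1 - Dl / K <= b1 by rewrite le_max lexx orbT.
have hb3 : b1 < 1.
  rewrite gt_max b01 /=; have : 0 < Dl / K by apply: divr_gt0.
  lra.
have hb4 : (1 - b1) * K <= Dl by rewrite -ler_pdivlMr //; lra.
set bt := (1 + b1) / 2.
have bb : 0 <= bt < 1 by apply/andP; split; rewrite /bt; lra.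
have bb0 : b0 < bt < 1 by apply/andP; split; rewrite /bt; lra.
have hbK : (1 - bt) * K <= Dl / 2 by rewrite /bt; lra.
set pi' := fun s a => if s == s1 then (a == a1)%:R else piB s a.
have pp' : is_policy pi'.
  split=> [s a|s]; rewrite /pi'.
    by case: (s == s1) => //; case: (a == a1).
  case: (s == s1) => //; rewrite -[RHS](sum_deltaT a1 (fun _ => 1)).
  by apply: eq_bigr => a _; rewrite mulr1.
set WB := fun j => Vpi (Plow P n s0) r bt piB j 0.
set W' := fun j => Vpi (Plow P n s0) r bt pi' j 0.
have HWB : WB s1 = Vstar (Plow P n s0) r bt s1 by apply: Hb.
have Hub : W' s1 <= WB s1 by rewrite HWB; apply: Vpi_ub.
set Q' := Ppi (Plow P n s0) pi'.
set g := fun i => rpi r pi' i 0 + bt * \sum_j Q' i j * WB j - WB i.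
have He i : W' i - WB i = g i + bt * \sum_j Q' i j * (W' j - WB j).
  rewrite /g /W' (Vpi_eq r i KPl pp' bb) -/Q'.
  under [X in _ = _ + _ * X]eq_bigr do rewrite mulrBr.
  rewrite sumrB; ring.
have WBeq i : WB i = u i + bt * ((1 - k) * \sum_j M i j * WB j + k * WB s0).
  rewrite /WB (Vpi_eq r i KPl ppB bb) Ppi_Plow //; congr (_ + _ * _).
  under eq_bigr do rewrite mxDE !mxZE mulrDl -!mulrA.
  rewrite big_split /= -!mulr_sumr -/k; congr (_ + _ * _).
  by under eq_bigr do rewrite mxE; exact: sum_delta_f.
have Vs i : V i = u i + (1 - k) * \sum_j M i j * V j.
  by rewrite /V (Vpi_eq r i KP ppB gg).
have g_other i : i != s1 -> g i = 0.
  move=> hi; rewrite /g.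
  have e1 : rpi r pi' i 0 = rpi r piB i 0.
    by rewrite !mxE; apply: eq_bigr => a _; rewrite /pi' (negbTE hi).
  have e2 j : Q' i j = Ppi (Plow P n s0) piB i j.
    by rewrite !mxE; apply: eq_bigr => a _; rewrite /pi' (negbTE hi).
  rewrite e1; under eq_bigr do rewrite e2.
  by rewrite /WB [X in _ - X](Vpi_eq r i KPl ppB bb) subrr.
set d := bt * (1 - k).
have kk : 0 < k <= 1 by rewrite k0 k1.
have [d0 d1 d2 d1'] := d_aux bb kk.
have dd : 0 <= d < 1 by rewrite d0 d2.
set kap := bt * bt * k * WB s0 / (1 - d).
set E := fun j => bt * WB j - kap - V j.
have sumE (p : 'I_m -> R) : \sum_j p j = 1 ->
    \sum_j p j * E j = bt * \sum_j p j * WB j - kap - \sum_j p j * V j.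
  move=> p1; rewrite /E.
  under eq_bigr do rewrite !mulrBr.
  by rewrite !sumrB -!mulr_suml p1 mul1r mulr_sumr; congr (_ - _ - _); apply: eq_bigr => j _; ring.
set c := (1 - bt) * (1 + CV).
have c0 : 0 <= c by apply: c_aux (proj2 (andP bb)) CV0.
have Eeq i : E i = ((bt - 1) * u i + (d - (1 - k)) * \sum_j M i j * V j) + d * \sum_j M i j * E j.
  rewrite (sumE _ (proj2 SM i)) /E (WBeq i) (Vs i) /kap /d; field; by [].
have yb i : `|(bt - 1) * u i + (d - (1 - k)) * \sum_j M i j * V j| <= c.
  exact: y_aux bb kk (MVb i) (ub i).
have Eb j : `|E j| <= c / k.
  apply: le_trans (fp_bound SM dd Eeq yb j) _.
  exact: Eb_aux c0 k0 d1.
have gs1 : Dl / 2 <= g s1.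
  have e1 : rpi r pi' s1 0 = r s1 a1.
    rewrite mxE /pi' eqxx; exact: sum_deltaT.
  have e2 j : Q' s1 j = (1 - k) * P s1 a1 j + k * (j == s0)%:R.
    by rewrite mxE /pi' eqxx (sum_deltaT a1 (fun a => Plow P n s0 s1 a j)).
  have e3 : \sum_j Q' s1 j * WB j = (1 - k) * \sum_j P s1 a1 j * WB j + k * WB s0.
    under eq_bigr do rewrite e2 mulrDl -!mulrA.
    by rewrite big_split /= -!mulr_sumr sum_delta_f.
  have hP := sumE (fun j => P s1 a1 j) (P1 s1 a1).
  have hM := sumE (fun j => M s1 j) (proj2 SM s1).
  have bP : `|\sum_j P s1 a1 j * E j| <= c / k by apply: prob_abs.
  have bM : `|\sum_j M s1 j * E j| <= c / k by apply: stoch_abs.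
  have hK : 2 * (c / k) = (1 - bt) * K by rewrite /K /c; field; rewrite gt_eqF.
  have gD : g s1 - Dl = (1 - k) * (\sum_j P s1 a1 j * E j - \sum_j M s1 j * E j).
    rewrite hP hM /g e1 e3 (WBeq s1) /Dl (Vs s1) /d; ring.
  apply: (fin_aux bP bM gD _ kk); rewrite hK; exact: hbK.
have g0 i : 0 <= g i.
  have [->|hi] := eqVneq i s1; first by apply: le_trans gs1; apply/ltW/divr_gt0.
  by rewrite g_other.
have := @fp_nonneg _ _ Q' bt (fun i => W' i - WB i) g (stoch_Ppi KPl pp') bb He g0 s1.
lra.
Qed.
End MDP.

Theorem mainTheorem18 (R : realType) (m : nat) (A : finType)
    (P : 'I_m -> A -> 'I_m -> R) (r : 'I_m -> A -> R) (n : nat) (s0 : 'I_m)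
    (pi : 'I_m -> A -> R) (h : 'I_m -> R) (piB : 'I_m -> A -> R) :
  is_kernel P ->
  (forall s a, 0 <= r s a <= 1) ->
  (2 <= n)%N ->
  is_policy pi ->
  greedy pi (rPh (Plow P n s0) r h) ->
  blackwell_optimal (Plow P n s0) r piB ->
  forall s : 'I_m,
    Vstar P r (1 - n%:R^-1) s - (Vpi P r (1 - n%:R^-1) pi) s 0
      <= (n%:R - 1) * spn (fun s' => bias (Plow P n s0) r piB s' - h s').
Proof.
move=> KP Hr n2 pp Hg HB s.
have n0 : (0 < n)%N by apply: leq_trans n2.
have [ppB _] := HB.
have Hopt := blackwell_opt KP n0 Hr HB.
have [D HD] := @bias_eq _ _ _ P r piB n s0 KP ppB n0 Hr.
have k0 : 0 < n%:R^-1 :> R by rewrite invr_gt0 ltr0n.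
have k1 : n%:R^-1 <= 1 :> R by rewrite invf_le1 ?ler1n ?ltr0n.
have gg : 0 <= 1 - (n%:R^-1 : R) < 1.
  by rewrite subr_ge0 k1 /= ltrBlDr ltrDl k0.
have H1 := @Vstar_le _ _ _ P r (1 - n%:R^-1) (fun j => Vpi P r (1 - n%:R^-1) piB j 0) s
  KP gg Hr (ex_intro _ pi pp) Hopt.
have HV : forall j, Vpi P r (1 - n%:R^-1) piB j 0 =
    h j + (fun s' => bias (Plow P n s0) r piB s' - h s') j + D.
  by move=> j /=; rewrite HD; ring.
have H2 := @greedy_bound _ _ _ P r n s0 pi piB h
  (fun s' => bias (Plow P n s0) r piB s' - h s') D s KP n0 Hr pp ppB Hg Hopt HV.
apply: le_trans H2; rewrite lerD2r; exact: H1.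
Qed.
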